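(* Let $C$ and $D$ be convex subsets of a real topological vector space $X$. Then $\operatorname{fri} C+\operatorname{fri} D\subseteq\operatorname{fri}(C+D)$, where $+$ denotes Minkowski sum.
   Context: For a convex set $C$, a convex subset $F\subseteq C$ is a face of $C$ if for every $x\in F$ and all $y,z\in C$ with $x\in(y,z)=\{(1-t)y+tz:t\in(0,1)\}$ we have $y,z\in F$; $F_{\min}(x,C)$ is the intersection of all faces of $C$ containing $x\in C$. The face relative interior is $\operatorname{fri} C=\{x\in C: C\subseteq\overline{F_{\min}(x,C)}\}$. *)

(* Defs.v *)
From HB Require Import structures.
From mathcomp Require Import all_boot all_order all_algebra.
From mathcomp Require Import all_classical all_reals all_analysis.
Set Implicit Arguments. Unset Strict Implicit. Unset Printing Implicit Defensive.
Import Order.TTheory GRing.Theory Num.Theory.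
Local Open Scope classical_set_scope.
Local Open Scope ring_scope.

Section FaceDefs.
Variables (R : realType) (X : topologicalLmodType R).

Definition open_segment (y z : X) : set X :=
  [set (1 - t) *: y + t *: z | t in `]0, 1[%classic].

Definition is_face (C F : set X) : Prop :=
  [/\ convex_set (F : set (convex_lmodType X)), F `<=` C &
      forall x y z, F x -> C y -> C z -> open_segment y z x -> F y /\ F z].

Definition Fmin (x : X) (C : set X) : set X :=
  \bigcap_(F in [set F | is_face C F /\ F x]) F.

Definition fri (C : set X) : set X :=
  [set x | C x /\ C `<=` closure (Fmin x C)].

Definition minkowski_sum (C D : set X) : set X :=
  [set c + d | c in C & d in D].

End FaceDefs.

(* Main.v *)
Require Import Defs.
From HB Require Import structures.
From mathcomp Require Import all_boot all_order all_algebra.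
From mathcomp Require Import all_classical all_reals all_analysis.
From mathcomp Require Import unstable.
Import Order.TTheory GRing.Theory Num.Theory.
Local Open Scope classical_set_scope.
Local Open Scope ring_scope.

Section Helpers.
Variables (R : realType) (X : topologicalLmodType R).

Lemma closure_msum (A B : set X) a b :
  closure A a -> closure B b -> closure (minkowski_sum A B) (a + b).
Proof.
move=> clA clB N Nab.
have [/= U [Ua Ub] sub] := @add_continuous X (a, b) _ Nab.
have [a' [Aa' Ua']] := clA _ Ua.
have [b' [Bb' Ub']] := clB _ Ub.
exists (a' + b'); split; first by exists a' => //; exists b'.
exact: (sub (a', b')).
Qed.

Lemma face_shift (S F C : set X) (d : X) :
  is_face S F -> convex_set (C : set (convex_lmodType X)) ->
  (forall c, C c -> S (c + d)) ->
  is_face C [set c | C c /\ F (c + d)].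
Proof.
move=> [cvxF FS faceF] cvxC CS; split.
- move=> x y l; rewrite !inE => -[Cx Fx] [Cy Fy]; split.
    by have := cvxC x y l; rewrite !inE; apply.
  have := cvxF (x + d) (y + d) l; rewrite !inE => /(_ Fx Fy).
  congr F; rewrite /conv /=.
  rewrite !scalerDr addrACA -scalerDl.
  by rewrite add_onemK scale1r.
- by move=> x [].
- move=> x y z [Cx Fx] Cy Cz [t t01 xE].
  have := faceF (x + d) (y + d) (z + d) Fx (CS _ Cy) (CS _ Cz).
  case.
    exists t => //; rewrite -xE !scalerDr addrACA -scalerDl.
    by rewrite subrK scale1r.
  by move=> Fy Fz; split; split.
Qed.

End Helpers.
Arguments face_shift {R X S F C d}.
Arguments closure_msum {R X A B a b}.

Theorem proposition4p4 (R : realType) (X : topologicalLmodType R)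
    (C D : set X) :
  convex_set (C : set (convex_lmodType X)) ->
  convex_set (D : set (convex_lmodType X)) ->
  minkowski_sum (fri C) (fri D) `<=` fri (minkowski_sum C D).
Proof.
move=> cvxC cvxD _ [c [Cc clc] [d [Dd cld] <-]].
have key : forall c' d', Fmin c C c' -> Fmin d D d' ->
    Fmin (c + d) (minkowski_sum C D) (c' + d').
  move=> c' d' Hc' Hd' F [faceF Fcd].
  have [Cc' Fc'd] : C c' /\ F (c' + d).
    apply: (Hc' [set x | C x /\ F (x + d)]); split => //.
    apply: (face_shift faceF cvxC) => x Cx.
    by exists x => //; exists d.
  have [Dd' Fd'c] : D d' /\ F (d' + c').
    apply: (Hd' [set x | D x /\ F (x + c')]); split; last first.
      by split => //; rewrite addrC.
    apply: (face_shift faceF cvxD) => x Dx.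
    by exists c' => //; exists x => //; rewrite addrC.
  by rewrite addrC.
split; first by exists c => //; exists d.
rewrite /fri /=.
move=> _ [c1 Cc1 [d1 Dd1 <-]].
have H1 := closure_msum (clc _ Cc1) (cld _ Dd1).
apply: (closureS _ H1).
move=> _ [c' Hc' [d' Hd' <-]].
exact: (key c' d' Hc' Hd').
Qed.
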